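(* Let $X \subseteq {}^\omega 2$ with $|X| = \mathfrak{c}$. Then there exists $X' \subseteq X$ with $|X'| = \mathfrak{c}$ and $X' \in s_0$.
   Context: ${}^\omega 2$ is the Cantor space; $\mathfrak c=2^{\aleph_0}$. A set $Y \subseteq {}^\omega 2$ is Marczewski null ($Y \in s_0$) if for every perfect set $P \subseteq {}^\omega 2$ there is a perfect set $Q \subseteq P$ with $Q \cap Y = \emptyset$. *)

(* Defs.v *)
From HB Require Import structures.
From mathcomp Require Import all_boot all_order all_algebra.
From mathcomp Require Import all_classical all_reals all_analysis.
Set Implicit Arguments. Unset Strict Implicit. Unset Printing Implicit Defensive.
Local Open Scope classical_set_scope.

Definition perfect (P : set cantor_space) : Prop :=
  P !=set0 /\ perfect_set P.

Definition marczewski_null (Y : set cantor_space) : Prop :=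
  forall P : set cantor_space, perfect P ->
    exists Q : set cantor_space, [/\ perfect Q, Q `<=` P & Q `&` Y = set0].

(* Main.v *)
Require Import Defs.
From HB Require Import structures.
From mathcomp Require Import all_boot all_order all_algebra.
From mathcomp Require Import all_classical all_reals all_analysis.
From mathcomp Require Import wochoice.
Unset Printing Implicit Defensive.
Local Open Scope classical_set_scope.
Import numFieldTopology.Exports.
Local Notation C := cantor_space.


Definition agree (n : nat) (x y : C) := forall i, (i < n)%N -> x i = y i.

Lemma agree_nbhs (x : C) n : nbhs x [set y | agree n x y].
Proof.
elim: n => [|n IH]; first by apply: filterS (filterT : nbhs x setT) => y _ i; rewrite ltn0.
have : nbhs x (proj n @^-1` [set x n]).
  apply: open_nbhs_nbhs; split => //.
  apply: open_comp; [move=> + _; exact: proj_continuous| apply: discrete_open].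
move=> H; apply: filterS (filterI IH H) => y [Ha Hb] i.
by rewrite ltnS leq_eqVlt => /predU1P[->|/Ha //]; rewrite -Hb.
Qed.
Lemma nbhs_agree (x : C) U : nbhs x U -> exists n, forall y, agree n x y -> U y.
Proof.
move=> xU; apply: contrapT => /forallNP H.
have H' n : exists y, agree n x y /\ ~ U y.
  by have /existsNP[y /not_implyP [? ?]] := H n; exists y.
pose g n := projT1 (cid (H' n)).
have gP n : agree n x (g n) /\ ~ U (g n) by rewrite /g; case: cid.
have gcvg : g @ \oo --> x.
  apply/cvg_sup => N V [W] [ [Z] oZ <-] ZxN WV.
  apply: (filterS WV); rewrite nbhs_simpl; exists N.+1 => // i /= Hi.
  by rewrite -(gP i).1.
have [N _ HN] := gcvg U xU.
exact: (gP N).2 (HN N (leqnn N)).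
Qed.

Lemma agree_refl n (x : C) : agree n x x. Proof. by []. Qed.
Lemma agree_sym {n} {x y : C} : agree n x y -> agree n y x.
Proof. by move=> H i /H ->. Qed.
Lemma agree_trans {n} {x y z : C} : agree n x y -> agree n y z -> agree n x z.
Proof. by move=> H1 H2 i Hi; rewrite H1 // H2. Qed.
Lemma agree_le {m n} {x y : C} : (m <= n)%N -> agree n x y -> agree m x y.
Proof. by move=> mn H i Hi; apply: H; apply: leq_trans mn. Qed.

Lemma closed_of (A : set C) :
  (forall x, (forall n, exists y, A y /\ agree n x y) -> A x) -> closed A.
Proof.
move=> H x clx; apply: H => n.
have [y [Ay Hy]] := clx _ (agree_nbhs x n).
by exists y.
Qed.

Lemma closed_sub {A : set C} {x} :
  closed A -> (forall n, exists y, A y /\ agree n x y) -> A x.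
Proof.
move=> clA H; apply: clA => B /nbhs_agree [n Hn].
have [y [Ay Hy]] := H n; exists y; split => //; exact: Hn.
Qed.

Lemma lp_agree {A : set C} {x} : limit_point A x ->
  forall n, exists y, [/\ y <> x, A y & agree n x y].
Proof.
move=> H n; have [y [/eqP yx Ay Hy]] := H _ (agree_nbhs x n).
by exists y.
Qed.

Lemma lp_of {A : set C} {x} : (forall n, exists y, [/\ y <> x, A y & agree n x y]) ->
  limit_point A x.
Proof.
move=> H U /nbhs_agree [n Hn]; have [y [yx Ay Hy]] := H n.
exists y; split => //; [exact/eqP | exact: Hn].
Qed.

Definition cperf (P : set C) :=
  [/\ exists x, P x,
      forall x, (forall n, exists y, P y /\ agree n x y) -> P x &
      forall x, P x -> forall n, exists y, [/\ y <> x, P y & agree n x y]].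

Lemma perfectE (P : set C) : perfect P <-> cperf P.
Proof.
split.
  move=> [[x Px] [clP lpP]]; split; first by exists x.
    by move=> y; apply: closed_sub.
  by move=> y Py; apply: lp_agree; rewrite lpP.
move=> [[x Px] clP lpP]; split; first by exists x.
have clP' : closed P by apply: closed_of.
split => //; rewrite eqEsubset; split => y.
  move=> Hy; apply: clP => n; have [z [_ Pz Hz]] := lp_agree Hy n.
  by exists z.
by move=> Py; apply: lp_of; apply: lpP.
Qed.



Definition Spl (P : set C) (pr : nat -> Prop) := forall m (r : C), P r ->
  exists x y k, [/\ P x, P y, agree m r x & agree m r y] /\ (pr k /\ x k <> y k).

Definition ccont (f : C -> C) :=
  forall z n, exists m, forall z', agree m z z' -> agree n (f z) (f z').

Section Scheme.
Variables (P : set C) (pr : nat -> Prop) (x0 : C).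
Hypotheses (Px0 : P x0) (HS : Spl P pr).

Definition spspec (mr : nat * C) (nr : (nat * C) * (nat * C)) :=
  [/\ P nr.1.2, P nr.2.2, agree mr.1 mr.2 nr.1.2 & agree mr.1 mr.2 nr.2.2] /\
  [/\ (mr.1 < nr.1.1)%N, (mr.1 < nr.2.1)%N &
      exists k, [/\ pr k, (k < nr.1.1)%N, (k < nr.2.1)%N & nr.1.2 k <> nr.2.2 k]].

Lemma sp_ex mr : exists nr, P mr.2 -> spspec mr nr.
Proof.
case: (pselect (P mr.2)) => Pr; last by exists ((0, x0), (0, x0)).
have [x [y [k [[Px Py Hx Hy] [Hk Hxy]]]]] := HS mr.1 mr.2 Pr.
exists ((maxn mr.1 k).+1, x, ((maxn mr.1 k).+1, y)) => _; split; split => //=;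
  rewrite ?ltnS ?leq_maxl //. all: try (exists k; split => //; rewrite ltnS leq_maxr).
all: by [].
Qed.

Definition sp mr := projT1 (cid (sp_ex mr)).
Lemma spP {mr} : P mr.2 -> spspec mr (sp mr).
Proof. by rewrite /sp; case: cid. Qed.

Fixpoint T (z : C) (n : nat) : nat * C :=
  if n is n'.+1 then (if z n' then (sp (T z n')).2 else (sp (T z n')).1)
  else (0%N, x0).

Lemma T_P z n : P (T z n).2.
Proof.
elim: n => //= n IH; have [[? ? ? ?] _] := spP IH; by case: (z n).
Qed.

Lemma T_step z n : (T z n).1 < (T z n.+1).1 /\ agree (T z n).1 (T z n).2 (T z n.+1).2.
Proof.
have [[? ? ? ?] [? ? _]] := spP (T_P z n); rewrite /=; by case: (z n).
Qed.

Lemma T_len z n : (n <= (T z n).1)%N.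
Proof.
elim: n => // n IH; have [H _] := T_step z n; exact: leq_ltn_trans IH H.
Qed.

Lemma T_mono z {n n'} : (n <= n')%N ->
  ((T z n).1 <= (T z n').1)%N /\ agree (T z n).1 (T z n).2 (T z n').2.
Proof.
elim: n' => [|n' IH]; first by rewrite leqn0 => /eqP ->.
rewrite leq_eqVlt => /predU1P[->//|]; rewrite ltnS => /IH [H1 H2].
have [H3 H4] := T_step z n'; split; first exact: leq_trans H1 (ltnW H3).
apply: agree_trans H2 _; exact: agree_le H1 H4.
Qed.

Lemma T_dep {z z' n} : agree n z z' -> T z n = T z' n.
Proof.
elim: n => // n IH H /=; rewrite IH; last by apply: agree_le H.
by rewrite (H n).
Qed.

Definition Phi (z : C) : C := fun i => (T z i.+1).2 i.

Lemma Phi_agree z n : agree (T z n).1 (T z n).2 (Phi z).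
Proof.
move=> i Hi; rewrite /Phi.
have [_ H1] := T_mono z (leq_maxl n i.+1).
have [H2 H3] := T_mono z (leq_maxr n i.+1).
rewrite H1 // H3 //; exact: leq_trans (T_len z i.+1).
Qed.

Hypothesis clP : forall x, (forall n, exists y, P y /\ agree n x y) -> P x.

Lemma Phi_P z : P (Phi z).
Proof.
apply: clP => n; exists (T z n).2; split; first exact: T_P.
apply: agree_sym; exact: agree_le (T_len z n) (Phi_agree z n).
Qed.

Lemma Phi_ccont : ccont Phi.
Proof.
move=> z n; exists n => z' H.
have E := T_dep H.
have H1 := agree_le (T_len z n) (Phi_agree z n).
have H2 := agree_le (T_len z' n) (Phi_agree z' n).
rewrite E in H1; exact: agree_trans (agree_sym H1) H2.
Qed.

Lemma first_diff (z z' : C) : z <> z' -> exists n, agree n z z' /\ z n <> z' n.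
Proof.
move=> zz'.
have ex : exists n, z n != z' n.
  apply: contrapT => /forallNP H; apply: zz'; apply: funext => n.
  by apply/eqP; apply: contrapT => /negP; apply: H.
case: (ex_minnP ex) => n /eqP Hn Hmin; exists n; split => // i Hi.
by apply/eqP; apply: contraTT Hi => /Hmin; rewrite leqNgt.
Qed.

Lemma Phi_inj z z' : z <> z' -> exists k, pr k /\ Phi z k <> Phi z' k.
Proof.
move=> /first_diff [n [Hag Hn]].
have E := T_dep Hag.
have [_ [_ _ [k [Hk k1 k2 Hd]]]] := spP (T_P z n).
exists k; split => //.
have A1 := Phi_agree z n.+1; have A2 := Phi_agree z' n.+1.
move: A1 A2; rewrite /= -E.
by case: (z n) Hn; case: (z' n) => // _ A1 A2;
  rewrite -A1 // -A2 //; move=> /esym.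
Qed.
End Scheme.



Definition cclosed (A : set C) :=
  forall x, (forall n, exists y, A y /\ agree n x y) -> A x.

Lemma cclosedE (A : set C) : closed A <-> cclosed A.
Proof. by split; [move=> clA x; apply: closed_sub | apply: closed_of]. Qed.

Lemma ccont_continuous f : ccont f -> continuous f.
Proof.
move=> cf z U /nbhs_agree [n Hn].
have [m Hm] := cf z n.
apply: filterS (agree_nbhs z m) => z' Hz'; apply: Hn; exact: Hm.
Qed.

Lemma img_closed f (A : set C) : ccont f -> cclosed A -> cclosed (f @` A).
Proof.
move=> cf /cclosedE clA; apply/cclosedE.
apply: (compact_closed cantor_space_hausdorff).
apply: continuous_compact.
  apply: continuous_subspaceT; exact: ccont_continuous.
apply: (subclosed_compact clA cantor_space_compact) => //.
Qed.

Lemma cperf_closed P : cperf P -> cclosed P.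
Proof. by case. Qed.

Lemma img_perfect f (A : set C) : ccont f -> (forall z z', f z = f z' -> z = z') ->
  cperf A -> cperf (f @` A).
Proof.
move=> cf finj [[a Aa] clA lpA]; split.
- by exists (f a), a.
- exact: img_closed.
- move=> _ [z Az <-] n; have [m Hm] := cf z n.
  have [z' [zz' Az' Hz']] := lpA z Az m.
  exists (f z'); split; [by move/finj | by exists z' | exact: Hm].
Qed.

Lemma agreeC_closed n (z : C) : cclosed [set y | ~ agree n z y].
Proof.
move=> x H Hx; have [y [Hy Hxy]] := H n; apply: Hy; exact: agree_trans Hx Hxy.
Qed.

Lemma pre_perfect f (P : set C) : ccont f -> (forall z z', f z = f z' -> z = z') ->
  cperf P -> P `<=` range f -> cperf (f @^-1` P).
Proof.
move=> cf finj [[p Pp] clP lpP] Prg; split.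
- by have [z _ fz] := Prg p Pp; exists z; rewrite /preimage /= fz.
- move=> z H; apply: clP => n; have [m Hm] := cf z n.
  have [z' [Pz' Hz']] := H m; exists (f z'); split => //; exact: Hm.
- move=> z Pz n.
  pose W := f @` [set y | ~ agree n z y].
  have clW : cclosed W by apply: img_closed => //; exact: agreeC_closed.
  have nW : ~ W (f z) by move=> [y Hy /finj yz]; apply: Hy; rewrite yz.
  have [k Hk] : exists k, forall y, W y -> ~ agree k (f z) y.
    apply: contrapT => /forallNP H; apply: nW; apply: clW => k.
    have /existsNP [y /not_implyP [Wy /contrapT Hy]] := H k.
    by exists y.
  have [y [yfz Py Hy]] := lpP _ Pz k.
  have [z' _ fz'] := Prg y Py.
  exists z'; split.
  + by move=> zz; apply: yfz; rewrite -fz' zz.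
  + by rewrite /preimage /= fz'.
  + apply: contrapT => Hn; apply: (Hk y) => //; by exists z'.
Qed.

Lemma cyl_perfect P m (r : C) : cperf P -> P r -> cperf (P `&` [set y | agree m r y]).
Proof.
move=> [_ clP lpP] Pr; split.
- by exists r.
- move=> x H; split.
    apply: clP => n; have [y [[Py _] Hy]] := H n; by exists y.
  have [y [[_ Hy1] Hy2]] := H m; exact: agree_trans Hy1 (agree_sym Hy2).
- move=> x [Px Hx] n; have [y [yx Py Hy]] := lpP x Px (maxn n m).
  exists y; split => //; last exact: agree_le (leq_maxl _ _) Hy.
  split => //; exact: agree_trans Hx (agree_le (leq_maxr _ _) Hy).
Qed.

Lemma neq_diff {x y : C} : x <> y -> exists k, x k <> y k.
Proof.
move=> xy; apply: contrapT => /forallNP H; apply: xy; apply: funext => k.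
exact: contrapT (H k).
Qed.

Lemma cperf_Spl P : cperf P -> Spl P (fun _ => True).
Proof.
move=> [_ _ lpP] m r Pr; have [y [yr Py Hy]] := lpP r Pr m.
have [k Hk] := neq_diff (nesym yr).
by exists r, y, k.
Qed.

Definition pi (x : C) : C := fun n => x (n.*2.+1).
Definition ev (x : C) : C := fun n => x (n.*2).
Definition ilv (u v : C) : C := fun n => if odd n then v n./2 else u n./2.
Definition F (y : C) := [set x | pi x = y].

Lemma pi_ilv u v : pi (ilv u v) = v.
Proof. by apply: funext => n; rewrite /pi /ilv /= odd_double uphalf_double. Qed.

Lemma ev_ilv u v : ev (ilv u v) = u.
Proof. by apply: funext => n; rewrite /ev /ilv /= odd_double half_double. Qed.

Lemma F_perfect y : cperf (F y).
Proof.
split.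
- by exists (ilv y y); rewrite /F /= pi_ilv.
- move=> x H; apply: funext => k.
  have [x' [Fx' Hx']] := H (k.*2.+2).
  rewrite /pi Hx' //; by rewrite -Fx'.
- move=> x Fx n.
  exists (fun i => if i == n.*2 then ~~ x i else x i); split.
  + move/(congr1 (fun f => f n.*2)); rewrite eqxx; by case: (x n.*2).
  + rewrite /F /= -Fx; apply: funext => k; rewrite /pi.
    have -> : (k.*2.+1 == n.*2) = false.
      by apply/negbTE; apply: contraTN isT => /eqP /(congr1 odd); rewrite /= !odd_double.
    by [].
  + move=> i Hi; have -> : (i == n.*2) = false; last by [].
    apply/negbTE; rewrite neq_ltn; apply/orP; left.
    apply: leq_trans Hi _; by rewrite -addnn leq_addr.
Qed.



Lemma scheme P pr : cperf P -> Spl P pr -> exists f, [/\ ccont f, forall z, P (f z) &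
  forall z z', z <> z' -> exists k, pr k /\ f z k <> f z' k].
Proof.
move=> [[x0 Px0] clP _] HS.
exists (Phi P pr x0 HS); split.
- exact: Phi_ccont.
- move=> z; exact: Phi_P.
- move=> z z'; exact: Phi_inj.
Qed.

Lemma scheme_inj (f : C -> C) pr :
  (forall z z', z <> z' -> exists k, pr k /\ f z k <> f z' k) ->
  forall z z', f z = f z' -> z = z'.
Proof.
move=> H z z' E; apply: contrapT => /H [k [_ Hk]]; by rewrite E in Hk.
Qed.

Definition small {T} (A : set T) :=
  ~ exists f : T -> C, forall c, exists2 a, A a & f a = c.

Lemma small_sub {T} (A B : set T) : A `<=` B -> small B -> small A.
Proof.
move=> AB sB [f Hf]; apply: sB; exists f => c; have [a Aa fa] := Hf c.
by exists a => //; apply: AB.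
Qed.

Lemma small_img {T U} (g : T -> U) (A : set T) : small A -> small (g @` A).
Proof.
move=> sA [f Hf]; apply: sA; exists (f \o g) => c; have [_ [a Aa <-] fa] := Hf c.
by exists a.
Qed.

Lemma small_ex {T} {A : set T} (f : T -> C) : small A -> exists c, forall a, A a -> f a <> c.
Proof.
move=> sA; apply: contrapT => /forallNP H; apply: sA; exists f => c.
have /existsNP [a /not_implyP [Aa /contrapT fa]] := H c; by exists a.
Qed.

Lemma small_U {T} (A B : set T) : small A -> small B -> small (A `|` B).
Proof.
move=> sA sB [f Hf].
have [u Hu] := small_ex (ev \o f) sA.
have [v Hv] := small_ex (pi \o f) sB.
have [a [Aa|Ba] fa] := Hf (ilv u v).
- by apply: (Hu a Aa); rewrite /= fa ev_ilv.
- by apply: (Hv a Ba); rewrite /= fa pi_ilv.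
Qed.

Lemma small_set1 {T} (a : T) : small [set a].
Proof.
move=> [f Hf].
have [_ -> E1] := Hf (ilv (fun _ => true) (fun _ => true)).
have [_ -> E2] := Hf (ilv (fun _ => false) (fun _ => false)).
have := congr1 (fun x : C => x 0%N) (etrans (esym E1) E2).
by rewrite /ilv /=.
Qed.

Lemma small_set0 {T} : small (@set0 T).
Proof. move=> [f Hf]; by have [a] := Hf (fun _ => true). Qed.

Lemma notsmallT : ~ small [set: C].
Proof. apply; exists id => c; by exists c. Qed.

Lemma small_notall (A : set C) : small A -> exists c, ~ A c.
Proof.
move=> sA; have [c Hc] := small_ex id sA; exists c => Ac; exact: Hc Ac erefl.
Qed.

Definition inv (f : C -> C) (a : C) : C :=
  match pselect (exists z, f z = a) with
  | left h => projT1 (cid h)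
  | right _ => a
  end.

Lemma invK f z : (forall z z', f z = f z' -> z = z') -> inv f (f z) = z.
Proof.
move=> finj; rewrite /inv; case: pselect => [h|]; last by move=> H; exfalso; apply: H; exists z.
by case: cid => z' /= fz'; exact: finj _ _ fz'.
Qed.

Lemma avoid P (A : set C) : cperf P -> small A ->
  exists Q, [/\ cperf Q, Q `<=` P & forall a, A a -> ~ Q a].
Proof.
move=> hP sA; have [f [cf fP fd]] := scheme _ _ hP (cperf_Spl _ hP).
have finj := scheme_inj _ _ fd.
have : exists y, forall a, A a -> ~ (f @` F y) a.
  apply: contrapT => /forallNP H; apply: sA; exists (pi \o inv f) => y.
  have /existsNP [a /not_implyP [Aa /contrapT [z Fz fz]]] := H y.
  by exists a => //=; rewrite -fz invK.
move=> [y Hy]; exists (f @` F y); split => //.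
- exact: img_perfect _ _ cf finj (F_perfect y).
- by move=> _ [z _ <-].
Qed.

Definition typed (Q : set C) (l : option C) :=
  match l with
  | Some y => Q `<=` F y
  | None => forall a b, Q a -> Q b -> pi a = pi b -> a = b
  end.

Lemma typed_sub Q Q' l : Q' `<=` Q -> typed Q l -> typed Q' l.
Proof.
case: l => [y|] /= sub H; first exact: subset_trans sub H.
move=> a b Qa Qb; apply: H; exact: sub.
Qed.

Lemma dichotomy P : cperf P -> exists Q l, [/\ cperf Q, Q `<=` P & typed Q l].
Proof.
move=> hP; case: (pselect (Spl P (fun k => odd k))) => [HS|nS].
  have [f [cf fP fd]] := scheme _ _ hP HS.
  have finj := scheme_inj _ _ fd.
  exists (f @` setT), None; split.
  - apply: img_perfect _ _ cf finj _; split; [by exists point|by []|].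
    move=> x _ n; exists (fun i => if i == n then ~~ x i else x i); split => //.
      move/(congr1 (fun g => g n)); rewrite eqxx; by case: (x n).
    by move=> i Hi; rewrite (ltn_eqF Hi).
  - by move=> _ [z _ <-].
  - move=> _ _ [z _ <-] [z' _ <-] E.
    case: (pselect (z = z')) => [->//|zz']; have [k [ok Hk]] := fd z z' zz'.
    exfalso; apply: Hk; have := congr1 (fun g => g k./2) E; rewrite /pi /=.
    have Ek : (k./2).*2.+1 = k by rewrite -[RHS](odd_double_half k) ok add1n.
    by rewrite Ek.
move: nS; rewrite /Spl => /existsNP [m /existsNP [r /not_implyP [Pr H]]].
have Hall : forall x y k, P x -> P y -> agree m r x -> agree m r y -> odd k -> x k = y k.
  move=> x y k Px Py Hx Hy ok; apply: contrapT => Hk; apply: H.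
  by exists x, y, k.
exists (P `&` [set y | agree m r y]), (Some (pi r)); split.
- exact: cyl_perfect.
- by move=> ? [].
- move=> x [Px Hx]; apply: funext => k; rewrite /pi.
  apply: Hall => //; try by move=> ?.
  all: by rewrite oddS odd_double.
Qed.

Definition code (A : set C) : C := fun n =>
  match @unpickle (seq bool) n with
  | Some s => `[< exists x, A x /\ forall i, (i < size s)%N -> nth false s i = x i >]
  | None => false
  end.

Lemma code_sub A B : cclosed B -> code A = code B -> A `<=` B.
Proof.
move=> clB E x Ax; apply: clB => n.
have := congr1 (fun g => g (pickle (mkseq x n))) E; rewrite /code pickleK.
have -> : `[< exists y, A y /\ forall i, (i < size (mkseq x n))%N ->
    nth false (mkseq x n) i = y i >] = true.
  apply/asboolP; exists x; split => // i; rewrite size_mkseq => Hi.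
  by rewrite nth_mkseq.
move/esym/asboolP => [y [By Hy]]; exists y; split => // i Hi.
have := Hy i; rewrite size_mkseq nth_mkseq //; by apply.
Qed.

Lemma code_inj A B : cclosed A -> cclosed B -> code A = code B -> A = B.
Proof.
move=> clA clB E; apply/seteqP; split; [exact: code_sub | apply: code_sub => //].
Qed.



Definition R : rel C := projT1 (well_ordering_principle C).
Lemma R_wo : well_order R.
Proof. exact: projT2 (well_ordering_principle C). Qed.

Lemma R_min {A : set C} : (exists a, A a) -> exists z, A z /\ forall y, A y -> R z y.
Proof.
move=> [a Aa].
have ne : nonempty [pred w | `[< A w >]] by exists a; rewrite inE.
have [z [[zA zlb] _]] := R_wo _ ne.
exists z; split; first by move: zA; rewrite inE.
by move=> y Ay; apply: zlb; rewrite inE.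
Qed.

Lemma R_refl x : R x x.
Proof.
have [z [zx H]] := @R_min (fun w => w = x) (ex_intro _ x erefl).
by rewrite -zx; apply: H.
Qed.

Lemma R_anti x y : R x y -> R y x -> x = y.
Proof.
move=> xy yx.
have ne : nonempty [pred w | (w == x) || (w == y)] by exists x; rewrite inE eqxx.
have [z [[zA zlb] zu]] := R_wo _ ne.
have Hx : minimum_of R [pred w | (w == x) || (w == y)] x.
  split; first by rewrite inE eqxx.
  by move=> w; rewrite inE => /orP[/eqP->|/eqP->]; [apply: R_refl|].
have Hy : minimum_of R [pred w | (w == x) || (w == y)] y.
  split; first by rewrite inE eqxx orbT.
  by move=> w; rewrite inE => /orP[/eqP->|/eqP->]; [|apply: R_refl].
by rewrite -(zu _ Hx) (zu _ Hy).
Qed.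

Lemma R_total x y : R x y \/ R y x.
Proof.
have [z [Az Hz]] := @R_min (fun w => w = x \/ w = y) (ex_intro _ x (or_introl erefl)).
case: Az => <-; [left|right]; apply: Hz; by [right|left].
Qed.

Lemma R_trans x y z : R x y -> R y z -> R x z.
Proof.
move=> xy yz.
have [w [Aw Hw]] := @R_min (fun w => [\/ w = x, w = y | w = z]) (ex_intro _ x (@Or31 _ _ _ erefl)).
case: Aw => E; subst w.
- by apply: Hw; apply: Or33.
- have wx := Hw x (@Or31 _ _ _ erefl).
  by rewrite (R_anti _ _ xy wx).
- have zx := Hw x (@Or31 _ _ _ erefl); have zy := Hw y (@Or32 _ _ _ erefl).
  by rewrite -(R_anti _ _ yz zy).
Qed.

Definition lt (x y : C) := R x y /\ x <> y.

Lemma lt_wf : well_founded lt.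
Proof.
move=> x; apply: contrapT => nA.
have [z [Az Hz]] := @R_min (fun w => ~ Acc lt w) (ex_intro _ x nA).
apply: Az; constructor => y [yz ynz]; apply: contrapT => nAy.
by apply: ynz; apply: R_anti => //; apply: Hz.
Qed.

Lemma lt_trichotomy x y : [\/ lt x y, x = y | lt y x].
Proof.
case: (pselect (x = y)) => [->|xy]; first by apply: Or32.
case: (R_total x y) => H; [apply: Or31|apply: Or33]; split => //; exact: nesym.
Qed.

Lemma lt_trans x y z : lt x y -> lt y z -> lt x z.
Proof.
move=> [xy nxy] [yz nyz]; split; first exact: R_trans xy yz.
by move=> E; subst z; apply: nxy; apply: R_anti.
Qed.

Definition seg a := [set b | lt b a].
Definition I0 := [set a | small (seg a)].

Lemma I0_down a b : I0 a -> lt b a -> I0 b.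
Proof.
move=> Ia ba; apply: small_sub Ia => c cb; exact: lt_trans cb ba.
Qed.

Lemma I0_big : ~ small I0.
Proof.
case: (pselect (exists a, ~ small (seg a))) => [ex|nex].
  have [z [Az Hz]] := R_min ex.
  move=> sI; apply: Az; apply: small_sub sI => b [bz nbz].
  apply: contrapT => nb; apply: nbz; apply: R_anti => //; exact: Hz.
have -> : I0 = setT.
  by apply/seteqP; split => // a _; apply: contrapT => H; apply: nex; exists a.
exact: notsmallT.
Qed.

Lemma I0_le a : I0 a -> small [set b | lt b a \/ b = a].
Proof.
move=> Ia; have -> : [set b | lt b a \/ b = a] = seg a `|` [set a] by [].
by apply: small_U => //; apply: small_set1.
Qed.



Definition Stage := (C * set C * option C)%type.

Lemma fiber_uniq (Q : set C) l y : exists q : C,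
  typed Q l -> l <> Some y -> forall x, Q x -> F y x -> x = q.
Proof.
case: l => [y'|].
  exists point => /= H yy' x Qx Fx; exfalso; apply: yy'.
  by rewrite -Fx (H x Qx).
case: (pselect (exists x, Q x /\ F y x)) => [[q [Qq Fq]]|nq].
  exists q => /= H _ x Qx Fx; apply: H => //; by rewrite Fx Fq.
exists point => _ _ x Qx Fx; exfalso; apply: nq; by exists x.
Qed.

Definition fpt (Q : set C) l y := projT1 (cid (fiber_uniq Q l y)).
Lemma fptP Q l y : typed Q l -> l <> Some y -> forall x, Q x -> F y x -> x = fpt Q l y.
Proof. rewrite /fpt; case: cid => q /= H; exact: H. Qed.

Section Construction.
Variables (Y : set C) (Pe : C -> set C).
Hypothesis HY : forall P, cperf P -> ~ small (Y `&` P).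
Hypothesis HPe : forall a, cperf (Pe a).

Definition spec (a : C) (h : forall b, lt b a -> Stage) (s : Stage) :=
  [/\ cperf s.1.2, s.1.2 `<=` Pe a, typed s.1.2 s.2, Y s.1.1 & ~ s.1.2 s.1.1] /\
  [/\ (forall b p, ~ s.1.2 (h b p).1.1), (forall b p, ~ (h b p).1.2 s.1.1) &
      (forall b p, pi (h b p).1.1 <> pi s.1.1)].

Definition dflt : Stage := (point, set0, None).

Definition step (a : C) (h : forall b, lt b a -> Stage) : Stage :=
  match pselect (exists s, spec a h s) with
  | left e => projT1 (cid e)
  | right _ => dflt
  end.

Definition G := Fix lt_wf (fun _ => Stage) step.

Lemma G_eq a : G a = step a (fun b _ => G b).
Proof.
rewrite /G; apply: Fix_eq => x f g H.
have -> : f = g; last by [].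
apply: functional_extensionality_dep => b; apply: functional_extensionality_dep => p.
exact: H.
Qed.

Lemma step_spec a h : (exists s, spec a h s) -> spec a h (step a h).
Proof. rewrite /step => ex; case: pselect => // e; by case: cid. Qed.

Lemma G_spec a : I0 a -> spec a (fun b _ => G b) (G a).
Proof.
elim/(well_founded_ind lt_wf): a => a IH Ia.
rewrite G_eq; apply: step_spec.
have IHs b : lt b a -> spec b (fun c _ => G c) (G b).
  move=> ba; apply: IH => //; exact: I0_down Ia ba.
have [Q0 [l [Q0p Q0sub Q0t]]] := dichotomy _ (HPe a).
have sA : small [set (G b).1.1 | b in seg a].
  exact: small_img.
have [Q [Qp QQ0 QA]] := avoid _ _ Q0p sA.
have Qt : typed Q l := typed_sub _ _ _ QQ0 Q0t.
pose Bad := [set pi (G b).1.1 | b in seg a] `|`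
  ([set odflt point (G b).2 | b in seg a] `|` [set odflt point l]).
have sBad : small Bad.
  apply: small_U; first exact: small_img.
  apply: small_U; [exact: small_img | exact: small_set1].
have [y ny] := small_notall _ sBad.
pose E := [set fpt (G b).1.2 (G b).2 y | b in seg a] `|` [set fpt Q l y].
have sE : small E by apply: small_U; [exact: small_img|exact: small_set1].
have lny : l <> Some y by move=> ly; apply: ny; right; right; rewrite /= ly.
have bny b : lt b a -> (G b).2 <> Some y.
  by move=> ba ly; apply: ny; right; left; exists b => //; rewrite ly.
have [x [Yx Fx nE]] : exists x, [/\ Y x, F y x & ~ E x].
  apply: contrapT => /forallNP H; apply: (HY _ (F_perfect y)).
  apply: small_sub sE => x [Yx Fx]; apply: contrapT => nEx.
  by apply: (H x).
exists (x, Q, l); split; split => //=.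
- exact: subset_trans QQ0 Q0sub.
- by move=> Qx; apply: nE; right; rewrite /= (fptP _ _ _ Qt lny x Qx Fx).
- move=> b p; apply: QA; by exists b.
- move=> b p Qbx; apply: nE; left; exists b => //.
  have [[_ _ tb _ _] _] := IHs b p.
  by rewrite -(fptP _ _ _ tb (bny b p) x Qbx Fx).
- move=> b p E'; apply: ny; left; exists b => //; by rewrite E' Fx.
Qed.

Definition xs a := (G a).1.1.
Definition Qs a := (G a).1.2.

Lemma xs_Y a : I0 a -> Y (xs a).
Proof. by move=> /G_spec [[]]. Qed.

Lemma Qs_perf a : I0 a -> cperf (Qs a).
Proof. by move=> /G_spec [[]]. Qed.

Lemma Qs_sub a : I0 a -> Qs a `<=` Pe a.
Proof. by move=> /G_spec [[]]. Qed.

Lemma xs_inj a b : I0 a -> I0 b -> xs a = xs b -> a = b.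
Proof.
move=> Ia Ib E; case: (lt_trichotomy a b) => // H.
- have [_ [_ _ Hp]] := G_spec b Ib; exfalso; exact: (Hp a H (congr1 pi E)).
- have [_ [_ _ Hp]] := G_spec a Ia; exfalso; exact: (Hp b H (congr1 pi (esym E))).
Qed.

Lemma Qs_avoid a b : I0 a -> I0 b -> ~ Qs a (xs b).
Proof.
move=> Ia Ib; case: (lt_trichotomy a b) => [H|<-|H].
- by have [_ [_ /(_ a H) ? _]] := G_spec b Ib.
- by have [[_ _ _ _ ?] _] := G_spec a Ia.
- by have [_ [/(_ b H) ? _ _]] := G_spec a Ia.
Qed.
End Construction.



Lemma cperf_setT : cperf [set: C].
Proof.
split; [by exists point | by [] |].
move=> x _ n; exists (fun i => if i == n then ~~ x i else x i); split => //.
  move/(congr1 (fun g => g n)); rewrite eqxx; by case: (x n).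
by move=> i Hi; rewrite (ltn_eqF Hi).
Qed.

Lemma nclosed_cyl (A : set C) p : cclosed A -> ~ A p -> exists k, forall w, A w -> ~ agree k p w.
Proof.
move=> clA nA; apply: contrapT => /forallNP H; apply: nA; apply: clA => k.
have /existsNP [y /not_implyP [Ay /contrapT Hy]] := H k.
by exists y.
Qed.

Local Open Scope card_scope.

Theorem lemma2p3 (X : set cantor_space) :
  X #= [set: cantor_space] ->
  exists X' : set cantor_space,
    [/\ X' `<=` X, X' #= [set: cantor_space] & marczewski_null X'].
Proof.
move=> HX.
case: (pselect (exists Z, cperf Z /\ forall Z', cperf Z' -> Z' `<=` Z -> ~ small (X `&` Z')))
  => [[Z [Zp HZ]]|nZ]; last first.
  exists X; split => //.
  move=> P /perfectE Pp.
  have [Z' [Z'p Z'P sXZ']] : exists Z', [/\ cperf Z', Z' `<=` P & small (X `&` Z')].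
    apply: contrapT => H; apply: nZ; exists P; split => // Z' Z'p Z'P sX.
    by apply: H; exists Z'; split.
  have [Q [Qp QZ' QA]] := avoid _ _ Z'p sXZ'.
  exists Q; split; [exact/perfectE | exact: subset_trans QZ' Z'P |].
  apply/seteqP; split => // q [Qq Xq]; apply: (QA q) => //; split => //; exact: QZ'.
have [f [cf fZ fd]] := scheme _ _ Zp (cperf_Spl _ Zp).
have finj := scheme_inj _ _ fd.
pose Y := f @^-1` X.
have HY : forall P, cperf P -> ~ small (Y `&` P).
  move=> P Pp sYP; apply: (HZ (f @` P)).
  - exact: img_perfect _ _ cf finj Pp.
  - by move=> _ [z _ <-].
  - apply: small_sub (small_img f _ sYP) => a [Xa [z Pz fz]].
    exists z => //; split => //; by rewrite /Y /preimage /= fz.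
have [en Hen] : exists en : C -> C, forall c, exists2 a, I0 a & en a = c.
  exact: contrapT I0_big.
pose Pe a := match pselect (exists P, cperf P /\ code P = en a) with
  | left h => projT1 (cid h) | right _ => setT end.
have HPe : forall a, cperf (Pe a).
  move=> a; rewrite /Pe; case: pselect => [h|_]; last exact: cperf_setT.
  by case: cid => P [].
pose X' := f @` [set xs Y Pe a | a in I0].
exists X'; split.
- move=> _ [_ [a Ia <-] <-]; exact: (xs_Y Y Pe HY HPe a Ia).
- apply: Cantor_Bernstein; first exact: card_leT.
  apply/pcard_leP; apply/injfunPex.
  pose ia c := projT1 (cid2 (Hen c)).
  have iaP c : I0 (ia c) /\ en (ia c) = c by rewrite /ia; case: cid2.
  exists (fun c => f (xs Y Pe (ia c))).
    move=> c _; exists (xs Y Pe (ia c)) => //; exists (ia c) => //; exact: (iaP c).1.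
  move=> c c' _ _ /finj /(xs_inj Y Pe HY HPe _ _ (iaP c).1 (iaP c').1) E.
  by rewrite -(iaP c).2 -(iaP c').2 E.
- move=> P /perfectE Pp.
  case: (pselect (P `<=` range f)) => [Prg|nPrg].
    pose P' := f @^-1` P.
    have P'p : cperf P' by apply: pre_perfect.
    have [a Ia ea] := Hen (code P').
    have PeE : Pe a = P'.
      rewrite /Pe; case: pselect => [h|nh]; last first.
        by exfalso; apply: nh; exists P'; split.
      case: cid => Q [Qp Qc] /=.
      apply: code_inj (cperf_closed _ Qp) (cperf_closed _ P'p) _.
      by rewrite Qc ea.
    exists (f @` Qs Y Pe a); split.
    + apply/perfectE; apply: img_perfect _ _ cf finj _; exact: Qs_perf.
    + move=> _ [q Qq <-]; have := Qs_sub Y Pe HY HPe a Ia q Qq; by rewrite PeE.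
    + apply/seteqP; split => // _ [[q Qq <-] [_ [b Ib <-] /finj E]].
      apply: (Qs_avoid Y Pe HY HPe a b Ia Ib); by rewrite E.
  have [p [Pp' np]] : exists p, P p /\ ~ range f p.
    apply: contrapT => H; apply: nPrg => p Pp'; apply: contrapT => np.
    by apply: H; exists p.
  have clR : cclosed (range f) by apply: img_closed => //; move=> x _.
  have [k Hk] := nclosed_cyl _ _ clR np.
  exists (P `&` [set w | agree k p w]); split.
  + apply/perfectE; exact: cyl_perfect.
  + by move=> ? [].
  + apply/seteqP; split => // w [[_ Hw] [z _ fz]].
    by apply: (Hk w) => //; exists z.
Qed.
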